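(* In the setting of the context, the subalgebra of invariants $M_1^B=\{x\in M_1: b\triangleright x=\varepsilon(b)x \text{ for all } b\in B\}$ equals $M$.
   Context: $k$ is a field; $C_R(S)=\{r\in R:rs=sr\ \forall s\in S\}$. $N\subseteq M$ is a strongly separable, irreducible extension of $k$-algebras: $C_M(N)=k1$ and there are an $N$-bimodule map $E:M\to N$ and $x_1,\dots,x_n,y_1,\dots,y_n\in M$ with $\sum_iE(mx_i)y_i=m=\sum_ix_iE(y_im)$ for all $m\in M$, $E(1)\neq0$, $\sum_ix_iy_i\neq0$; normalized so that $E(1)=1$, whence $\sum_ix_iy_i=\lambda^{-1}1$ with $0\neq\lambda\in k$. Basic construction: given $S\subseteq R$, an $S$-bimodule map $E_S:R\to S$ with $E_S(1)=1$ and $r_i,s_i\in R$ with $\sum_iE_S(rr_i)s_i=r=\sum_ir_iE_S(s_ir)$ and $\sum_ir_is_i=\lambda^{-1}1$, set $R_1=R\otimes_SR$ with product $(a\otimes b)(c\otimes d)=aE_S(bc)\otimes d$, unit $\sum_ir_i\otimes s_i$, $R\subseteq R_1$ via $r\mapsto\sum_irr_i\otimes s_i$, Jones idempotent $e=1\otimes1$, $E_R:R_1\to R$, $a\otimes b\mapsto\lambda ab$; then $E_R$, $\lambda^{-1}r_i\otimes1$, $1\otimes s_i$ satisfy the same conditions with the same $\lambda$. From $(N\subseteq M,E)$ get $M_1,e_1,E_M$; from $(M\subseteq M_1,E_M)$ get $M_2,e_2,E_{M_1}$. Let $A=C_{M_1}(N)$, $B=C_{M_2}(M)$, $C=C_{M_2}(N)$.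 Depth 2 is assumed: $M_1$ is free as right $M$-module with basis in $A$, $M_2$ free as right $M_1$-module with basis in $B$. Let $F=E_M\circ E_{M_1}$, with values on $C$ in $k1\cong k$. The counit of $B$ is $\varepsilon(b)=\lambda^{-2}F(e_2e_1b)$, and $B$ acts on $M_1$ by $b\triangleright x=\lambda^{-1}E_{M_1}(bxe_2)$. *)

(* Defs.v *)
From HB Require Import structures.
From mathcomp Require Import all_boot all_order all_algebra.
Set Implicit Arguments. Unset Strict Implicit. Unset Printing Implicit Defensive.
Import GRing.Theory.
Local Open Scope ring_scope.

Definition centralizes (R : nzRingType) (P : R -> Prop) (r : R) : Prop :=
  forall s, P s -> r * s = s * r.

Definition is_subalgebra (k : fieldType) (R : algType k) (P : R -> Prop) : Prop :=
  [/\ P 1,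
      forall a b, P a -> P b -> P (a + b),
      forall a, P a -> P (- a),
      forall a b, P a -> P b -> P (a * b)
    & forall (c : k) a, P a -> P (c *: a)].

(* (R1, tens) is the tensor product R (x)_S R of k-vector spaces balanced over S:
   tens is k-bilinear and S-balanced, its image spans R1, and every k-bilinear
   S-balanced map into a k-vector space factors linearly through tens. *)
Definition is_tensor_over (k : fieldType) (R : algType k) (S : R -> Prop)
    (R1 : lmodType k) (tens : R -> R -> R1) : Prop :=
  (forall a a' b, tens (a + a') b = tens a b + tens a' b) /\
  (forall a b b', tens a (b + b') = tens a b + tens a b') /\
  (forall (c : k) a b, tens (c *: a) b = c *: tens a b) /\
  (forall (c : k) a b, tens a (c *: b) = c *: tens a b) /\
  (forall a s b, S s -> tens (a * s) b = tens a (s * b)) /\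
  (forall t : R1, exists m (u v : 'I_m -> R), t = \sum_(j < m) tens (u j) (v j)) /\
  (forall (V : lmodType k) (f : R -> R -> V),
         (forall a a' b, f (a + a') b = f a b + f a' b) ->
         (forall a b b', f a (b + b') = f a b + f a b') ->
         (forall (c : k) a b, f (c *: a) b = c *: f a b) ->
         (forall (c : k) a b, f a (c *: b) = c *: f a b) ->
         (forall a s b, S s -> f (a * s) b = f a (s * b)) ->
         exists g : R1 -> V,
           [/\ forall t t', g (t + t') = g t + g t',
               forall (c : k) t, g (c *: t) = c *: g t
             & forall a b, g (tens a b) = f a b]).

Definition bc_inc (k : fieldType) (R : algType k) (R1 : algType k)
    (tens : R -> R -> R1) (n : nat) (r s : 'I_n -> R) (a : R) : R1 :=
  \sum_(i < n) tens (a * r i) (s i).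

Definition bc_jones (k : fieldType) (R : algType k) (R1 : algType k)
    (tens : R -> R -> R1) : R1 := tens 1 1.

Definition is_basic_construction (k : fieldType) (R : algType k) (S : R -> Prop)
    (ES : R -> R) (n : nat) (r s : 'I_n -> R) (lam : k)
    (R1 : algType k) (tens : R -> R -> R1) (ER : R1 -> R) : Prop :=
  is_tensor_over S tens /\
  (forall a b c d, tens a b * tens c d = tens (a * ES (b * c)) d) /\
  (1 = \sum_(i < n) tens (r i) (s i) :> R1) /\
  (forall t t', ER (t + t') = ER t + ER t') /\
  (forall (c : k) t, ER (c *: t) = c *: ER t) /\
  (forall a b, ER (tens a b) = lam *: (a * b)).

(* R1 is free as a right R-module (via inc : R -> R1) with a basis contained in P.
   (R1 is finitely generated over R in our setting, so every basis is finite.) *)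
Definition right_free_with_basis_in (k : fieldType) (R R1 : algType k)
    (inc : R -> R1) (P : R1 -> Prop) : Prop :=
  exists (p : nat) (u : 'I_p -> R1),
    [/\ forall j, P (u j),
        forall t : R1, exists m : 'I_p -> R, t = \sum_(j < p) u j * inc (m j)
      & forall m : 'I_p -> R, \sum_(j < p) u j * inc (m j) = 0 -> forall j, m j = 0].

(* Main.v *)
Require Import Defs.
From HB Require Import structures.
From mathcomp Require Import all_boot all_order all_algebra.
From mathcomp Require Import ring.
Import GRing.Theory.
Local Open Scope ring_scope.
Set Implicit Arguments. Unset Strict Implicit.
Lemma additive_sum (V W : zmodType) (f : V -> W)
  (Hf : forall a b, f (a + b) = f a + f b) (I : Type) (r : seq I) (P : pred I) (F : I -> V) :
  f (\sum_(i <- r | P i) F i) = \sum_(i <- r | P i) f (F i).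
Proof.
have f0 : f 0 = 0.
  have := Hf 0 0; rewrite addr0 => /(congr1 (fun t => t - f 0)).
  by rewrite addrK subrr => ->.
exact: (big_morph f Hf f0).
Qed.

Section BC.
Set Default Proof Using "All".
Variables (k : fieldType) (R : algType k) (S : R -> Prop) (ES : R -> R)
  (n : nat) (r s : 'I_n -> R) (lam : k) (R1 : algType k)
  (tens : R -> R -> R1) (ER : R1 -> R).
Hypothesis HB : is_basic_construction S ES r s lam tens ER.
Hypothesis HSE : forall a, S (ES a).
Hypothesis HQ1 : forall a, \sum_(i < n) ES (a * r i) * s i = a.
Hypothesis HQ2 : forall a, \sum_(i < n) r i * ES (s i * a) = a.

Local Notation inc := (bc_inc tens r s).
Local Notation e := (bc_jones tens).

Lemma Ta a a' b : tens (a + a') b = tens a b + tens a' b.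
Proof. by case: HB => [[H _]] _. Qed.
Lemma Tb a b b' : tens a (b + b') = tens a b + tens a b'.
Proof. by case: HB => [[_ [H _]]] _. Qed.
Lemma Tsa c a b : tens (c *: a) b = c *: tens a b.
Proof. by case: HB => [[_ [_ [H _]]]] _. Qed.
Lemma Tsb c a b : tens a (c *: b) = c *: tens a b.
Proof. by case: HB => [[_ [_ [_ [H _]]]]] _. Qed.
Lemma Tbal a m b : S m -> tens (a * m) b = tens a (m * b).
Proof. by case: HB => [[_ [_ [_ [_ [H _]]]]]] _; apply: H. Qed.
Lemma Tspan t : exists m (u v : 'I_m -> R), t = \sum_(j < m) tens (u j) (v j).
Proof. by case: HB => [[_ [_ [_ [_ [_ [H _]]]]]]] _. Qed.
Lemma Tmul a b c d : tens a b * tens c d = tens (a * ES (b * c)) d.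
Proof. by case: HB => _ [H _]. Qed.
Lemma T1 : 1 = \sum_(i < n) tens (r i) (s i) :> R1.
Proof. by case: HB => _ [_ [H _]]. Qed.
Lemma ERa t t' : ER (t + t') = ER t + ER t'.
Proof. by case: HB => _ [_ [_ [H _]]]. Qed.
Lemma ERs c t : ER (c *: t) = c *: ER t.
Proof. by case: HB => _ [_ [_ [_ [H _]]]]. Qed.
Lemma ERt a b : ER (tens a b) = lam *: (a * b).
Proof. by case: HB => _ [_ [_ [_ [_ H]]]]. Qed.

Lemma tens_suml I (rr : seq I) (P : pred I) F b :
  tens (\sum_(i <- rr | P i) F i) b = \sum_(i <- rr | P i) tens (F i) b.
Proof. by rewrite (@additive_sum _ _ (fun a => tens a b)) // => a a'; apply: Ta. Qed.
Lemma tens_sumr I (rr : seq I) (P : pred I) F a :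
  tens a (\sum_(i <- rr | P i) F i) = \sum_(i <- rr | P i) tens a (F i).
Proof. by rewrite (@additive_sum _ _ (fun b => tens a b)) // => b b'; apply: Tb. Qed.
Lemma ER_sum I (rr : seq I) (P : pred I) F :
  ER (\sum_(i <- rr | P i) F i) = \sum_(i <- rr | P i) ER (F i).
Proof. by rewrite (@additive_sum _ _ ER) // => ??; apply: ERa. Qed.

Lemma tens_bal1 u v : S u -> tens u v = tens 1 (u * v).
Proof. by move=> Su; rewrite -{1}(mul1r u) Tbal. Qed.

Lemma mul_inc_tens a c d : inc a * tens c d = tens (a * c) d.
Proof.
rewrite /bc_inc mulr_suml.
under eq_bigr => i _ do rewrite Tmul -mulrA.
by rewrite -tens_suml -mulr_sumr HQ2.
Qed.

Lemma mul_tens_inc a b m : tens a b * inc m = tens a (b * m).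
Proof.
rewrite /bc_inc mulr_sumr.
under eq_bigr => i _ do rewrite Tmul Tbal // mulrA.
by rewrite -tens_sumr HQ1.
Qed.

Lemma inc_add a b : inc (a + b) = inc a + inc b.
Proof. by rewrite /bc_inc -big_split; apply: eq_bigr => i _; rewrite mulrDl Ta. Qed.
Lemma inc_scale c a : inc (c *: a) = c *: inc a.
Proof. by rewrite /bc_inc scaler_sumr; apply: eq_bigr => i _; rewrite -scalerAl Tsa. Qed.
Lemma inc1 : inc 1 = 1.
Proof. by rewrite /bc_inc T1; apply: eq_bigr => i _; rewrite mul1r. Qed.
Lemma inc_mul a b : inc (a * b) = inc a * inc b.
Proof.
rewrite {2}/bc_inc mulr_sumr /bc_inc; apply: eq_bigr => i _.
by rewrite mul_inc_tens mulrA.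
Qed.

Lemma e_inc z : e * inc z = tens 1 z.
Proof.
rewrite /bc_jones /bc_inc mulr_sumr.
under eq_bigr => i _ do rewrite Tmul !mul1r tens_bal1 //.
by rewrite -tens_sumr HQ1.
Qed.

Lemma inc_e z : inc z * e = tens z 1.
Proof.
rewrite /bc_jones /bc_inc mulr_suml.
under eq_bigr => i _ do rewrite Tmul mulr1 -mulrA.
rewrite -tens_suml -mulr_sumr.
by have := HQ2 1; under eq_bigr => i _ do rewrite mulr1; move=> ->; rewrite mulr1.
Qed.

Lemma e_comm m : S m -> e * inc m = inc m * e.
Proof. by move=> Sm; rewrite e_inc inc_e (@tens_bal1 m 1) // mulr1. Qed.

Lemma tens_inc_e a b : tens a b = inc a * e * inc b.
Proof. by rewrite -mulrA e_inc mul_inc_tens mulr1. Qed.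

Lemma ER_e : ER e = lam *: 1.
Proof. by rewrite /bc_jones ERt mulr1. Qed.

Lemma ER_bimod a b t : ER (inc a * t * inc b) = a * ER t * b.
Proof.
have [m [u [v ->]]] := Tspan t.
rewrite (mulr_sumr _ _ (fun j => tens (u j) (v j))) (mulr_suml _ _ _ (inc b)) !ER_sum.
rewrite (mulr_sumr _ _ _ a) (mulr_suml _ _ _ b).
apply: eq_bigr => j _.
by rewrite mul_inc_tens mul_tens_inc !ERt -scalerAr -scalerAl !mulrA.
Qed.

Lemma ER1 : \sum_(i < n) r i * s i = lam^-1 *: 1 -> lam != 0 -> ER 1 = 1.
Proof.
move=> Hrs Hl; rewrite T1 ER_sum.
under eq_bigr => i _ do rewrite ERt.
by rewrite -scaler_sumr Hrs scalerA mulfV // scale1r.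
Qed.

Lemma ze_pull z : exists w, z * e = tens w 1.
Proof.
have [m [u [v ->]]] := Tspan z.
rewrite mulr_suml /bc_jones.
under eq_bigr => j _ do rewrite Tmul.
by rewrite -tens_suml; eexists.
Qed.

Lemma centr_scalar (Hl : lam != 0)
  (Hirr : forall m, (forall s, S s -> m * s = s * m) -> exists c : k, m = c *: 1)
  z : (forall a, z * inc a = inc a * z) -> exists c : k, z = c *: 1.
Proof.
move=> Hz; have [w Hw] := ze_pull z.
have [c Hc] : exists c : k, w = c *: 1.
  apply: Hirr => m Sm.
  have H : z * e * inc m = inc m * (z * e).
    by rewrite -mulrA e_comm // mulrA Hz mulrA.
  rewrite Hw mul_tens_inc mul_inc_tens mul1r -(mulr1 m) -Tbal // in H.
  move/(congr1 ER): H; rewrite !ERt !mulr1.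
  by move/(scalerI Hl).
exists c.
have Hze : z * e = c *: e by rewrite Hw Hc Tsa.
rewrite -[z]mulr1 T1 mulr_sumr scaler_sumr.
apply: eq_bigr => i _.
by rewrite tens_inc_e !mulrA Hz -(mulrA (inc (r i))) Hze -scalerAr -scalerAl.
Qed.

Lemma ER_incl a t : ER (inc a * t) = a * ER t.
Proof. by have := ER_bimod a 1 t; rewrite inc1 !mulr1. Qed.
Lemma ER_incr a t : ER (t * inc a) = ER t * a.
Proof. by have := ER_bimod 1 a t; rewrite inc1 !mul1r. Qed.
Lemma ER0 : ER 0 = 0.
Proof. by rewrite -(scale0r 0) ERs scale0r. Qed.

Lemma ext_tens (V : zmodType) (f g : R1 -> V) :
  (forall t t', f (t + t') = f t + f t') -> (forall t t', g (t + t') = g t + g t') ->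
  (forall a b, f (tens a b) = g (tens a b)) -> forall t, f t = g t.
Proof.
move=> Hf Hg Hfg t; have [m [u [v ->]]] := Tspan t.
rewrite (@additive_sum _ _ f) // (@additive_sum _ _ g) //.
by apply: eq_bigr => j _.
Qed.

End BC.
Unset Implicit Arguments. Set Strict Implicit.

Theorem proposition5p2
  (k : fieldType) (M : algType k) (N : M -> Prop) (E : M -> M)
  (n : nat) (x y : 'I_n -> M) (lam : k)
  (* N is a k-subalgebra of M *)
  (HN : is_subalgebra N)
  (* E : M -> N is an N-bimodule map, normalized E(1) = 1 *)
  (HEN : forall m, N (E m))
  (HEadd : forall a b, E (a + b) = E a + E b)
  (HEbimod : forall a u v, N u -> N v -> E (u * a * v) = u * E a * v)
  (HE1 : E 1 = 1)
  (* quasi-basis *)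
  (Hq1 : forall m, \sum_(i < n) E (m * x i) * y i = m)
  (Hq2 : forall m, \sum_(i < n) x i * E (y i * m) = m)
  (Hlam : lam != 0)
  (Hxy : \sum_(i < n) x i * y i = lam^-1 *: 1)
  (* irreducibility: C_M(N) = k1 *)
  (Hirr : forall m, centralizes N m -> exists c : k, m = c *: 1)
  (* first basic construction  M1 = M (x)_N M *)
  (M1 : algType k) (t1 : M -> M -> M1) (EM : M1 -> M)
  (HM1 : is_basic_construction N E x y lam t1 EM)
  (* second basic construction  M2 = M1 (x)_M M1, for (M <= M1, E_M) with
     quasi-basis lam^-1 x_i (x) 1, 1 (x) y_i *)
  (M2 : algType k) (t2 : M1 -> M1 -> M2) (EM1 : M2 -> M1)
  (HM2 : is_basic_construction
           (fun u : M1 => exists m : M, u = bc_inc t1 x y m)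
           (fun u : M1 => bc_inc t1 x y (EM u))
           (fun i => lam^-1 *: t1 (x i) 1) (fun i => t1 1 (y i)) lam t2 EM1)
  (* depth 2 *)
  (HD1 : right_free_with_basis_in (bc_inc t1 x y)
           (centralizes (fun u : M1 => exists2 m, N m & u = bc_inc t1 x y m)))
  (HD2 : right_free_with_basis_in
           (bc_inc t2 (fun i => lam^-1 *: t1 (x i) 1) (fun i => t1 1 (y i)))
           (centralizes (fun w : M2 => exists m : M,
              w = bc_inc t2 (fun i => lam^-1 *: t1 (x i) 1) (fun i => t1 1 (y i))
                    (bc_inc t1 x y m)))) :
  let inc1 := bc_inc t1 x y in
  let inc2 := bc_inc t2 (fun i => lam^-1 *: t1 (x i) 1) (fun i => t1 1 (y i)) in
  let e1 := bc_jones t1 in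
  let e2 := bc_jones t2 in
  let F := fun w : M2 => EM (EM1 w) in
  (* B = C_{M2}(M) *)
  let inB := centralizes (fun w : M2 => exists m : M, w = inc2 (inc1 m)) in
  (* action  b |> u = lam^-1 E_{M1}(b u e2) *)
  let act := fun (b : M2) (u : M1) => lam^-1 *: EM1 (b * inc2 u * e2) in
  (* eps(b) u, with eps(b) = lam^-2 F(e2 e1 b) in k1 = k *)
  let eps_mul := fun (b : M2) (u : M1) => lam^-2 *: (inc1 (F (e2 * inc2 e1 * b)) * u) in
  forall u : M1,
    (forall b : M2, inB b -> act b u = eps_mul b u) <-> (exists m : M, u = inc1 m).
Proof.
move=> inc1 inc2 e1 e2 F inB act eps_mul u.
rewrite /act /eps_mul /inB /F /e1 /e2 /inc2 /inc1 => {act eps_mul inB F e1 e2 inc2 inc1}.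
set r2 := (fun i => lam^-1 *: t1 (x i) 1).
set s2 := (fun i => t1 1 (y i)).
set S2 := (fun u : M1 => exists m : M, u = bc_inc t1 x y m).
set ES2 := (fun u : M1 => bc_inc t1 x y (EM u)).
have B1 := HM1.
have Ta1 := Ta HM1 HEN Hq1 Hq2.
have Tb1 := Tb HM1 HEN Hq1 Hq2.
have Tbal1 := Tbal HM1 HEN Hq1 Hq2.
have Tmul1 := Tmul HM1 HEN Hq1 Hq2.
have ERa1 := ERa HM1 HEN Hq1 Hq2.
have ERs1 := ERs HM1 HEN Hq1 Hq2.
have ERt1 := ERt HM1 HEN Hq1 Hq2.
have tens_suml1 := tens_suml HM1 HEN Hq1 Hq2.
have tens_sumr1 := tens_sumr HM1 HEN Hq1 Hq2.
have T11 := T1 HM1 HEN Hq1 Hq2.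
have mit1 := mul_inc_tens HM1 HEN Hq1 Hq2.
have mti1 := mul_tens_inc HM1 HEN Hq1 Hq2.
have inca1 := inc_add HM1 HEN Hq1 Hq2.
have incs1 := inc_scale HM1 HEN Hq1 Hq2.
have inc11 := inc1 HM1 HEN Hq1 Hq2.
have ERincl1 := ER_incl HM1 HEN Hq1 Hq2.
have ERincr1 := ER_incr HM1 HEN Hq1 Hq2.
have ERe1 := ER_e HM1 HEN Hq1 Hq2.
have ER11 := ER1 HM1 HEN Hq1 Hq2 Hxy Hlam.
have HSE2 : forall a, S2 (ES2 a) by move=> a; exists (EM a).
have HQ2' : forall a, \sum_(i < n) r2 i * ES2 (s2 i * a) = a.
  apply: (ext_tens HM1 HEN Hq1 Hq2 (f := fun a => \sum_(i < n) r2 i * ES2 (s2 i * a)) (g := id)) => //.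
    move=> t t'; rewrite -big_split; apply: eq_bigr => i _.
    by rewrite /ES2 mulrDr ERa1 inca1 mulrDr.
  move=> a b /=; rewrite /r2 /s2 /ES2.
  under eq_bigr => i _ do rewrite Tmul1 ERt1 incs1 -scalerAl -scalerAr scalerA mulVf // scale1r mti1 !mul1r -Tbal1 //.
  by rewrite -tens_suml1 Hq2.
have HQ1' : forall a, \sum_(i < n) ES2 (a * r2 i) * s2 i = a.
  apply: (ext_tens HM1 HEN Hq1 Hq2 (f := fun a => \sum_(i < n) ES2 (a * r2 i) * s2 i) (g := id)) => //.
    move=> t t'; rewrite -big_split; apply: eq_bigr => i _.
    by rewrite /ES2 mulrDl ERa1 inca1 mulrDl.
  move=> a b /=; rewrite /r2 /s2 /ES2.
  under eq_bigr => i _ do rewrite -scalerAr Tmul1 ERs1 ERt1 scalerA mulVf // scale1r mulr1 mit1 mulr1 Tbal1 //.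
  by rewrite -tens_sumr1 Hq1.
have Hrs2 : \sum_(i < n) r2 i * s2 i = lam^-1 *: 1.
  rewrite /r2 /s2.
  under eq_bigr => i _ do rewrite -scalerAl Tmul1 mulr1 HE1 mulr1.
  by rewrite -scaler_sumr -T11.
have Tmul2 := Tmul HM2 HSE2 HQ1' HQ2'.
have ERa2 := ERa HM2 HSE2 HQ1' HQ2'.
have ERs2 := ERs HM2 HSE2 HQ1' HQ2'.
have ERt2 := ERt HM2 HSE2 HQ1' HQ2'.
have einc2 := e_inc HM2 HSE2 HQ1' HQ2'.
have ecomm2 := e_comm HM2 HSE2 HQ1' HQ2'.
have ERincl2 := ER_incl HM2 HSE2 HQ1' HQ2'.
have ERincr2 := ER_incr HM2 HSE2 HQ1' HQ2'.
have ERe2 := ER_e HM2 HSE2 HQ1' HQ2'.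
have KF : forall b, EM (EM1 (bc_jones t2 * bc_inc t2 r2 s2 (bc_jones t1) * b))
                    = EM (bc_jones t1 * EM1 (b * bc_jones t2)).
  apply: (ext_tens HM2 HSE2 HQ1' HQ2'
    (f := fun b => EM (EM1 (bc_jones t2 * bc_inc t2 r2 s2 (bc_jones t1) * b)))
    (g := fun b => EM (bc_jones t1 * EM1 (b * bc_jones t2)))).
  - by move=> t t'; rewrite mulrDr ERa2 ERa1.
  - by move=> t t'; rewrite mulrDl ERa2 mulrDr ERa1.
  move=> p q /=.
  rewrite einc2 Tmul2 ERt2 ERs1 mul1r /ES2 ERincl1.
  rewrite /bc_jones Tmul2 ERt2 mulr1 -scalerAr ERs1 /ES2 mulrA ERincr1.
  by rewrite mulr1.
have e2B : forall m, bc_jones t2 * bc_inc t2 r2 s2 (bc_inc t1 x y m)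
                   = bc_inc t2 r2 s2 (bc_inc t1 x y m) * bc_jones t2.
  by move=> m; apply: ecomm2; exists m.
split.
- move=> H.
  have := H (bc_jones t2) (fun w '(ex_intro m Hw) => ltac:(rewrite Hw; exact: e2B)).
  rewrite KF einc2.
  have -> : bc_jones t2 * bc_jones t2 = bc_jones t2.
    by rewrite {1 2}/bc_jones Tmul2 /ES2 mulr1 ER11 inc11 mulr1.
  rewrite ERe2 -scalerAr mulr1 ERs1 ERe1 /bc_jones Tmul2 ERt2 /ES2 !mulr1 mul1r.
  rewrite scalerA mulVf // scale1r !incs1 inc11 scalerA -scalerAl mul1r scalerA.
  rewrite -expr2 mulVf ?expf_neq0 // scale1r => <-.
  by exists (EM u).
- case=> m -> b Hb.
  rewrite KF.
  set z := EM1 (b * bc_jones t2).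
  have Hz : forall a, z * bc_inc t1 x y a = bc_inc t1 x y a * z.
    move=> a; rewrite /z -ERincr2 -mulrA e2B mulrA (Hb _ (ex_intro _ a erefl)).
    by rewrite -mulrA ERincl2.
  have [c Hc] := centr_scalar HM1 HEN Hq1 Hq2 Hlam Hirr Hz.
  rewrite (Hb _ (ex_intro _ m erefl)) -mulrA ERincl2 -/z Hc.
  rewrite -scalerAr mulr1 -scalerAr mulr1 ERs1 ERe1 !incs1 inc11 -!scalerAl mul1r !scalerA.
  congr (_ *: _); field.
  done.
Qed.
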